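(* Let $N$ be a simple-$\mathcal F$-divisible $R$-module which is supplemented. Then: (a) $N$ is hollow; (b) for every Artinian submodule $V\subsetneq N$ there exists $\mathfrak a_0\in\mathcal F$ with $\mathfrak a_0V=0$, and there is an epimorphism $N/V\twoheadrightarrow N$; (c) if moreover every submodule of $N$ is supplemented, then every nonzero factor module of $N$ is again simple-$\mathcal F$-divisible.
   Context: Throughout, $R$ is a commutative Noetherian local ring, and $\mathcal F$ is a Gabriel topology on $R$: a nonempty set of ideals of $R$ such that (1) if $\mathfrak a\in\mathcal F$ and $\mathfrak a\subseteq\mathfrak b$ then $\mathfrak b\in\mathcal F$; (2) if $\mathfrak a,\mathfrak b\in\mathcal F$ then $\mathfrak a\cap\mathfrak b\in\mathcal F$; (3) if $\mathfrak b$ is an ideal and there is $\mathfrak a\in\mathcal F$ with $(\mathfrak b:r)\in\mathcal F$ for all $r\in\mathfrak a$, then $\mathfrak b\in\mathcal F$. A module $X$ is $\mathcal F$-divisible if $\mathfrak aX=X$ for all $\mathfrak a\in\mathcal F$. $N$ is simple-$\mathcal F$-divisible if $N\ne0$, $N$ is $\mathcal F$-divisible, and no submodule $0\neq V\subsetneq N$ is $\mathcal F$-divisible. A module $N$ is supplemented if for every submodule $V\subseteq N$ there is a submodule $W$ (a supplement of $V$) which is minimal among submodules with $V+W=N$. A module $N\ne0$ is hollow (couniform) if every proper submodule $V\subsetneq N$ is small in $N$, i.e. $V+W=N$ implies $W=N$. *)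

(* Defs.v *)
From HB Require Import structures.
From mathcomp Require Import all_boot all_order all_algebra.
Set Implicit Arguments. Unset Strict Implicit. Unset Printing Implicit Defensive.
Import GRing.Theory.
Local Open Scope ring_scope.

Section Defs.
Variable R : comNzRingType.

Definition is_ideal (I : R -> Prop) : Prop :=
  [/\ I 0, (forall x y, I x -> I y -> I (x + y)) & (forall r x, I x -> I (r * x))].

Definition subI (I J : R -> Prop) : Prop := forall x, I x -> J x.

Definition colon (b : R -> Prop) (r : R) : R -> Prop := fun x => b (x * r).

Definition noetherian_ring : Prop :=
  forall I : nat -> R -> Prop, (forall n, is_ideal (I n)) ->
    (forall n, subI (I n) (I n.+1)) ->
    exists m, forall n, (m <= n)%N -> subI (I n) (I m).

Definition local_ring : Prop :=
  exists m : R -> Prop, [/\ is_ideal m, ~ m 1 &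
    forall I, is_ideal I -> ~ I 1 -> subI I m].

Definition gabriel_topology (F : (R -> Prop) -> Prop) : Prop :=
  [/\ (forall a, F a -> is_ideal a),
      (exists a, F a),
      (forall a b, F a -> is_ideal b -> subI a b -> F b),
      (forall a b, F a -> F b -> F (fun x => a x /\ b x)) &
      (forall b, is_ideal b ->
         (exists2 a, F a & forall r, a r -> F (colon b r)) -> F b)].

Variable N : lmodType R.

Definition submodule (V : N -> Prop) : Prop :=
  [/\ V 0, (forall x y, V x -> V y -> V (x + y)) & (forall r x, V x -> V (r *: x))].

Definition subM (V W : N -> Prop) : Prop := forall x, V x -> W x.

Definition idealmul (a : R -> Prop) (X : N -> Prop) : N -> Prop :=
  fun y => exists s : seq (R * N),
    (forall p, p \in s -> a p.1 /\ X p.2) /\ y = \sum_(p <- s) p.1 *: p.2.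

Definition addM (V W : N -> Prop) : N -> Prop :=
  fun y => exists v w, [/\ V v, W w & y = v + w].

Definition eqM (V W : N -> Prop) : Prop := forall x, V x <-> W x.

Definition fullM : N -> Prop := fun _ => True.

Definition F_divisible (F : (R -> Prop) -> Prop) (X : N -> Prop) : Prop :=
  forall a, F a -> eqM (idealmul a X) X.

Definition nonzeroM (V : N -> Prop) : Prop := exists2 x, V x & x <> 0.

Definition simple_F_divisible (F : (R -> Prop) -> Prop) : Prop :=
  [/\ nonzeroM fullM, F_divisible F fullM &
      forall V, submodule V -> nonzeroM V -> (exists x, ~ V x) ->
        ~ F_divisible F V].

Definition supplement_in (U V W : N -> Prop) : Prop :=
  [/\ submodule W, subM W U, eqM (addM V W) U &
      forall W', submodule W' -> subM W' W -> eqM (addM V W') U -> subM W W'].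

Definition supplemented_in (U : N -> Prop) : Prop :=
  forall V, submodule V -> subM V U -> exists W, supplement_in U V W.

Definition supplemented : Prop := supplemented_in fullM.

(** N is hollow: N <> 0 and every proper submodule is small *)
Definition hollow : Prop :=
  nonzeroM fullM /\
  forall V, submodule V -> (exists x, ~ V x) ->
    forall W, submodule W -> eqM (addM V W) fullM -> eqM W fullM.

Definition artinian_in (V : N -> Prop) : Prop :=
  forall C : nat -> N -> Prop, (forall n, submodule (C n)) ->
    (forall n, subM (C n) V) -> (forall n, subM (C n.+1) (C n)) ->
    exists m, forall n, (m <= n)%N -> subM (C m) (C n).

End Defs.

(* Main.v *)
Require Import Defs.
From HB Require Import structures.
From mathcomp Require Import all_boot all_order all_algebra.
From Stdlib Require Import Classical ClassicalEpsilon.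
Import GRing.Theory.
Local Open Scope ring_scope.
Set Implicit Arguments. Unset Strict Implicit. Unset Printing Implicit Defensive.

Section Aux.
Variables (R : comNzRingType) (N : lmodType R).
Implicit Types (V W K U X : N -> Prop) (a b : R -> Prop).

Lemma idealmul_ind a X (P : N -> Prop) : P 0 -> (forall x y, P x -> P y -> P (x + y)) ->
  (forall r x, a r -> X x -> P (r *: x)) -> subM (idealmul a X) P.
Proof.
move=> P0 PD PZ y [s [Hs ->]]; elim: s Hs => [|p s IH] Hs; first by rewrite big_nil.
rewrite big_cons; apply: PD.
  by have [] := Hs p (mem_head _ _); apply: PZ.
by apply: IH => q Hq; apply: Hs; rewrite inE Hq orbT.
Qed.

Lemma idealmul_sub a V : submodule V -> subM (idealmul a V) V.
Proof. by case=> V0 VD VZ; apply: idealmul_ind => // r x _; apply: VZ. Qed.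

Lemma idealmul_single a X r x : a r -> X x -> idealmul a X (r *: x).
Proof.
move=> ar Xx; exists [:: (r, x)]; split; last by rewrite big_seq1.
by move=> p; rewrite inE => /eqP ->.
Qed.

Lemma idealmul_submodule a X : is_ideal a -> submodule (idealmul a X).
Proof.
case=> a0 aD aM; split.
- by exists [::]; rewrite big_nil.
- move=> x y [s1 [H1 ->]] [s2 [H2 ->]]; exists (s1 ++ s2); rewrite big_cat; split=> //.
  by move=> p; rewrite mem_cat => /orP [] ?; [apply: H1 | apply: H2].
- move=> r x [s [H ->]]; exists [seq (r * p.1, p.2) | p <- s]; split.
    move=> p /mapP [q Hq ->] /=; have [??] := H q Hq; split=> //; exact: aM.
  by rewrite big_map scaler_sumr; apply: eq_bigr => p _; rewrite scalerA.
Qed.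

Lemma addM_add K W : submodule K -> submodule W ->
  forall x y, addM K W x -> addM K W y -> addM K W (x + y).
Proof.
move=> [_ KD _] [_ WD _] x y [k [w [Hk Hw ->]]] [k' [w' [Hk' Hw' ->]]].
by exists (k + k'), (w + w'); split; [apply: KD|apply: WD|rewrite addrACA].
Qed.

Lemma idealmul_addM a K W : is_ideal a -> submodule K ->
  subM (idealmul a (addM K W)) (addM K (idealmul a W)).
Proof.
move=> ia sK; have sW := idealmul_submodule W ia.
apply: idealmul_ind.
- by exists 0, 0; split; [case: sK|case: sW|rewrite addr0].
- exact: addM_add.
- move=> r x ar [k [w [Hk Hw ->]]]; exists (r *: k), (r *: w); split.
  + by case: sK => _ _; apply.
  + exact: idealmul_single.
  + by rewrite scalerDr.
Qed.

Lemma supp_div F U K W : (forall a, F a -> is_ideal a) -> submodule K ->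
  supplement_in U K W ->
  (forall a, F a -> subM U (addM K (idealmul a U))) -> F_divisible F W.
Proof.
move=> Fid sK [sW WU eqKW min] H a Fa.
have ia := Fid a Fa.
have sub1 : subM (idealmul a W) W by apply: idealmul_sub.
have eq2 : eqM (addM K (idealmul a W)) U.
  move=> x; split.
    move=> [k [w [Hk Hw ->]]]; apply/eqKW; exists k, w; split=> //; exact: sub1.
  move=> /H - /(_ a Fa) [k [y [Hk Hy ->]]].
  have : idealmul a (addM K W) y.
    by apply: (idealmul_ind (P := idealmul a (addM K W))) Hy; [case: (idealmul_submodule (addM K W) ia)|case: (idealmul_submodule (addM K W) ia)| move=> r z ar /eqKW Hz; apply: idealmul_single].
  move=> /(idealmul_addM ia sK) [k' [y' [Hk' Hy' ->]]].
  exists (k + k'), y'; split=> //; last by rewrite addrA.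
  by case: sK => _ + _; apply.
have := min _ (idealmul_submodule W ia) sub1 eq2.
by move=> HW x; split; [apply: sub1|apply: HW].
Qed.

End Aux.
Section PartA.
Variables (R : comNzRingType) (N : lmodType R) (F : (R -> Prop) -> Prop).
Hypothesis gF : gabriel_topology F.
Hypothesis sF : simple_F_divisible N F.

Lemma Fideal a : F a -> is_ideal a.
Proof. by case: gF => H *; apply: H. Qed.

Lemma supp_full V W : submodule V -> (exists x, ~ V x) ->
  supplement_in (@fullM _ N) V W -> forall x, W x.
Proof.
move=> sV [x0 nx0] Hs.
have Wdiv : F_divisible F W.
  apply: (supp_div Fideal sV Hs) => a Fa x _.
  case: sF => _ Hd _; have /Hd - /(_ x) [_ Hx] := Fa.
  by exists 0, x; split=> //; [case: sV|apply: Hx|rewrite add0r].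
case: (Hs) => sW _ eqVW _.
have nzW : nonzeroM W.
  have [v [w [Hv Hw E]]] : addM V W x0 by apply/eqVW.
  exists w => // w0; apply: nx0; by rewrite E w0 addr0.
apply: NNPP => /not_all_ex_not Hp.
by case: sF => _ _ /(_ W sW nzW Hp).
Qed.

Lemma hollowN : supplemented N -> hollow N.
Proof.
move=> sup; split; first by case: sF.
move=> V sV pV W sW eqVW x; split=> // _.
apply: NNPP => nWx.
have [W2 HW2] := sup W sW (fun _ _ => I).
have W2f := supp_full sW (ex_intro _ x nWx) HW2.
case: HW2 => _ _ _ /(_ V sV (fun y _ => W2f y)).
have : eqM (addM W V) (@fullM _ N).
  move=> y; split=> // _; have [v [w [Hv Hw ->]]] : addM V W y by apply/eqVW.
  by exists w, v; rewrite addrC.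
move=> H /(_ H) HV; case: pV => y; apply; apply: HV; exact: W2f.
Qed.
End PartA.
Section PartC.
Variables (R : comNzRingType) (N : lmodType R) (F : (R -> Prop) -> Prop).
Hypothesis gF : gabriel_topology F.
Hypothesis sF : simple_F_divisible N F.

Lemma partC : (forall U : N -> Prop, submodule U -> supplemented_in U) ->
   forall (Q : lmodType R) (g : {linear N -> Q}),
     (forall q, exists x, g x = q) -> (exists q : Q, q <> 0) ->
     simple_F_divisible Q F.
Proof.
move=> allsup Q g gs [q0 nq0]; split.
- by exists q0.
- move=> a Fa q; split=> // _.
  have ia := Fideal gF Fa.
  have [x <-] := gs q.
  case: sF => _ /(_ a Fa x) [_ /(_ I)] + _.
  apply: (idealmul_ind (P := fun x => idealmul a (@fullM _ Q) (g x))).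
  + by rewrite linear0; case: (idealmul_submodule (@fullM _ Q) ia).
  + by move=> y z ?? ; rewrite linearD; case: (idealmul_submodule (@fullM _ Q) ia) => _ + _; apply.
  + by move=> r y ar _; rewrite linearZ_LR; apply: idealmul_single.
- move=> V' sV' [q1 Vq1 nq1] [q2 nVq2] Vdiv.
  pose U := fun x => V' (g x); pose K := fun x => g x = 0.
  have sU : submodule U.
    case: sV' => V0 VD VZ; split; rewrite /U.
    - by rewrite linear0.
    - by move=> x y ??; rewrite linearD; apply: VD.
    - by move=> r x ?; rewrite linearZ_LR; apply: VZ.
  have sK : submodule K.
    split; rewrite /K.
    - by rewrite linear0.
    - by move=> x y H1 H2; rewrite linearD H1 H2 addr0.
    - by move=> r x H1; rewrite linearZ_LR H1 scaler0.
  have KU : subM K U by move=> x; rewrite /K /U => ->; case: sV'.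
  have [W HW] := allsup U sU K sK KU.
  have Wdiv : F_divisible F W.
    apply: (supp_div (Fideal gF) sK HW) => a Fa u Uu.
    have ia := Fideal gF Fa.
    have : idealmul a V' (g u) by apply/(Vdiv a Fa).
    have sUa := idealmul_submodule U ia.
    move=> /(idealmul_ind (P := fun q => exists y, idealmul a U y /\ g y = q)).
    case.
    + by exists 0; rewrite linear0; split=> //; case: sUa.
    + move=> ?? [y1 [H1 <-]] [y2 [H2 <-]]; exists (y1 + y2); rewrite linearD; split=> //.
      by case: sUa => _ + _; apply.
    + move=> r q ar Vq; have [x E] := gs q; exists (r *: x); rewrite linearZ_LR E; split=> //.
      by apply: idealmul_single => //; move: Vq; rewrite -E.
    move=> y [Hy Ey]; exists (u - y), y; split=> //; last by rewrite subrK.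
    by rewrite /K linearB Ey subrr.
  case: HW => sW WU eqKW _.
  case: sF => _ _ /(_ W sW); apply => //.
  + have [x E] := gs q1.
    have [k [w [Hk Hw Ex]]] : addM K W x by apply/eqKW; rewrite /U /= E.
    exists w => // w0; apply: nq1; by rewrite -E Ex linearD Hk w0 linear0 addr0.
  + have [x E] := gs q2; exists x => /WU; by rewrite /U /= E.
Qed.
End PartC.
Section PartB.
Variables (R : comNzRingType) (N : lmodType R) (F : (R -> Prop) -> Prop).
Hypothesis gF : gabriel_topology F.
Hypothesis sF : simple_F_divisible N F.

Lemma min_elem (V : N -> Prop) (S : (N -> Prop) -> Prop) U0 : artinian_in V ->
  (forall U, S U -> submodule U /\ subM U V) -> S U0 ->
  exists U, S U /\ forall U', S U' -> subM U' U -> subM U U'.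
Proof.
move=> art HS SU0; apply: NNPP => H.
have H' : forall U, exists U', S U -> [/\ S U', subM U' U & ~ subM U U'].
  move=> U; case: (classic (S U)) => SU; last by exists U.
  apply: NNPP => nex; apply: H; exists U; split=> // U' SU' sub.
  apply: NNPP => nsub; apply: nex; exists U' => _; by split.
pose f U := proj1_sig (constructive_indefinite_description _ (H' U)).
have fP U : S U -> [/\ S (f U), subM (f U) U & ~ subM U (f U)].
  exact: (proj2_sig (constructive_indefinite_description _ (H' U))).
pose C n := iter n f U0.
have SC n : S (C n) by elim: n => [|n IH] //=; case: (fP _ IH).
have [m Hm] := art C (fun n => (HS _ (SC n)).1) (fun n => (HS _ (SC n)).2)
  (fun n => let: And3 _ h _ := fP _ (SC n) in h).
by case: (fP _ (SC m)) => _ _; apply; apply: (Hm m.+1).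
Qed.

Lemma annih (V : N -> Prop) : submodule V -> (exists x, ~ V x) -> artinian_in V ->
  exists a, F a /\ forall r v, a r -> V v -> r *: v = 0.
Proof.
move=> sV [x0 nx0] art.
have [Fid [a1 Fa1] Fup Fcap Fcol] := gF.
pose S U := [/\ submodule U, subM U V & exists a, F a /\ subM (idealmul a V) U].
have [U [[sU UV [a [Fa aVU]]] Umin]] : exists U, S U /\ forall U', S U' -> subM U' U -> subM U U'.
  apply: (min_elem (U0 := V) art); first by move=> U [].
  split=> //; exists a1; split=> //; exact: idealmul_sub.
have Udiv : F_divisible F U.
  move=> b Fb; have ib := Fid b Fb.
  have sbU := idealmul_submodule U ib.
  have bUU : subM (idealmul b U) U by apply: idealmul_sub.
  suff : subM U (idealmul b U) by move=> H x; split; [apply: bUU|apply: H].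
  apply: Umin => //; split=> //.
    by move=> x /bUU /UV.
  pose c := fun x => forall v, V v -> idealmul b U (x *: v).
  have ic : is_ideal c.
    case: sbU => b0 bD bZ; split.
    - by move=> v _; rewrite scale0r.
    - by move=> x y Hx Hy v Vv; rewrite scalerDl; apply: bD; [apply: Hx|apply: Hy].
    - by move=> r x Hx v Vv; rewrite -scalerA; apply: bZ; apply: Hx.
  exists c; split.
    apply: Fcol => //; exists a => // r ar.
    apply: (Fup b) => //.
      case: ic => c0 cD cM; split; rewrite /colon.
      - by rewrite mul0r.
      - by move=> x y ??; rewrite mulrDl; apply: cD.
      - by move=> r' x ?; rewrite -mulrA; apply: cM.
    move=> x bx v Vv; rewrite -scalerA; apply: idealmul_single => //.
    by apply: aVU; apply: idealmul_single.
  apply: idealmul_ind.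
  - by case: sbU.
  - by case: sbU.
  - by move=> r x cr Vx; apply: cr.
have U0 : forall x, U x -> x = 0.
  move=> x Ux; apply: NNPP => nx.
  case: sF => _ _ /(_ U sU (ex_intro2 _ _ x Ux nx)); apply => //.
  by exists x0 => /UV.
exists a; split=> // r v ar Vv; apply: U0; apply: aVU; exact: idealmul_single.
Qed.

Definition span (s : seq R) : R -> Prop :=
  fun x => exists c : nat -> R, x = \sum_(i < size s) c i * s`_i.

Lemma span_ideal s : is_ideal (span s).
Proof.
split.
- by exists (fun _ => 0); rewrite big1 // => i _; rewrite mul0r.
- move=> x y [c ->] [d ->]; exists (fun i => c i + d i); rewrite -big_split /=.
  by apply: eq_bigr => i _; rewrite mulrDl.
- move=> r x [c ->]; exists (fun i => r * c i); rewrite mulr_sumr.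
  by apply: eq_bigr => i _; rewrite mulrA.
Qed.

Lemma span_cons x s : subI (span s) (span (x :: s)) /\ span (x :: s) x.
Proof.
split.
  move=> y [c ->]; exists (fun i => if i is j.+1 then c j else 0).
  by rewrite /= big_ord_recl /= mul0r add0r.
exists (fun i => if i is 0 then 1 else 0).
rewrite /= big_ord_recl /= mul1r big1 ?addr0 // => i _; by rewrite mul0r.
Qed.

Lemma fg (a : R -> Prop) : noetherian_ring R -> is_ideal a ->
  exists s, (forall r, r \in s -> a r) /\ subI a (span s).
Proof.
move=> noeth ia; apply: NNPP => H.
have H' : forall s : seq R, exists x, (forall r, r \in s -> a r) -> a x /\ ~ span s x.
  move=> s; case: (classic (forall r, r \in s -> a r)) => Hs; last by exists 0.
  apply: NNPP => nex; apply: H; exists s; split=> // x ax.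
  apply: NNPP => nsp; apply: nex; exists x => _; by split.
pose g s := proj1_sig (constructive_indefinite_description _ (H' s)).
have gP s : (forall r, r \in s -> a r) -> a (g s) /\ ~ span s (g s).
  exact: (proj2_sig (constructive_indefinite_description _ (H' s))).
pose L n := iter n (fun s => g s :: s) [::].
have La n : forall r, r \in L n -> a r.
  elim: n => [|n IH] r //=; rewrite inE => /orP [/eqP ->|]; last exact: IH.
  by case: (gP _ IH).
have [m Hm] := noeth (fun n => span (L n)) (fun n => span_ideal _)
  (fun n => (span_cons (g (L n)) (L n)).1).
case: (gP _ (La m)) => _; apply; apply: (Hm m.+1) => //.
exact: (span_cons (g (L m)) (L m)).2.
Qed.

Definition T (s : seq R) : N -> Prop :=
  fun n => exists f : nat -> N, n = \sum_(i < size s) s`_i *: f i.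

Lemma T_submodule s : submodule (T s).
Proof.
split.
- by exists (fun _ => 0); rewrite big1 // => i _; rewrite scaler0.
- move=> x y [c ->] [d ->]; exists (fun i => c i + d i); rewrite -big_split /=.
  by apply: eq_bigr => i _; rewrite scalerDr.
- move=> r x [c ->]; exists (fun i => r *: c i); rewrite scaler_sumr.
  by apply: eq_bigr => i _; rewrite !scalerA mulrC.
Qed.

Lemma T_cons r s (n : N) : T (r :: s) n -> exists x y : N, T s y /\ n = r *: x + y.
Proof.
move=> [c ->]; exists (c 0), (\sum_(i < size s) s`_i *: c i.+1); split.
  by exists (fun i => c i.+1).
by rewrite /= big_ord_recl.
Qed.

Lemma hollow_T s : hollow N -> (forall n, T s n) ->
  exists r, r \in s /\ forall n : N, exists x : N, r *: x = n.
Proof.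
move=> [[n0 _ nn0] hol]; elim: s => [|r s IH] Hs.
  by case: nn0; have [c ->] := Hs n0; rewrite big_ord0.
case: (classic (forall n : N, exists x : N, r *: x = n)) => Hr.
  by exists r; rewrite mem_head.
have [r' [r's Hr']] : exists r', r' \in s /\ forall n : N, exists x : N, r' *: x = n.
  apply: IH => n.
  have sr : submodule (fun n : N => exists x : N, r *: x = n).
    split.
    - by exists 0; rewrite scaler0.
    - by move=> ?? [x <-] [y <-]; exists (x + y); rewrite scalerDr.
    - by move=> r' ? [x <-]; exists (r' *: x); rewrite !scalerA mulrC.
  have pr : exists x : N, ~ (exists y : N, r *: y = x).
    by apply: NNPP => H; apply: Hr => n'; apply: NNPP => H2; apply: H; exists n'.
  have := hol _ sr pr _ (T_submodule s).
  have eqA : eqM (addM (fun n : N => exists x : N, r *: x = n) (T s)) (@fullM _ N).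
    move=> y; split=> // _; have [x [z [Tz ->]]] := T_cons (Hs y).
    by exists (r *: x), z; split=> //; exists x.
  by move=> /(_ eqA n) [_ /(_ I)].
by exists r'; rewrite inE r's orbT.
Qed.

Lemma a0N (a : R -> Prop) s : F a -> subI a (span s) -> forall n : N, T s n.
Proof.
move=> Fa sub n.
case: sF => _ /(_ a Fa n) [_ /(_ I)] + _.
apply: idealmul_ind.
- by case: (T_submodule s).
- by case: (T_submodule s).
- move=> r x /sub [c ->] _; exists (fun i => c i *: x); rewrite scaler_suml.
  by apply: eq_bigr => i _; rewrite scalerA mulrC.
Qed.

End PartB.
Theorem lemma3p1 (R : comNzRingType) (F : (R -> Prop) -> Prop) (N : lmodType R) :
  noetherian_ring R -> local_ring R -> gabriel_topology F ->
  simple_F_divisible N F -> supplemented N ->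
  (* (a) *)
  hollow N /\
  (* (b) *)
  (forall V : N -> Prop, submodule V -> (exists x, ~ V x) -> artinian_in V ->
     (exists a0, F a0 /\ forall r v, a0 r -> V v -> r *: v = 0) /\
     (* epimorphism N/V ->> N, i.e. a surjective linear map N -> N killing V *)
     (exists f : {linear N -> N},
        (forall y, exists x, f x = y) /\ (forall v, V v -> f v = 0))) /\
  (* (c) *)
  ((forall U : N -> Prop, submodule U -> supplemented_in U) ->
   forall (Q : lmodType R) (g : {linear N -> Q}),
     (forall q, exists x, g x = q) -> (exists q : Q, q <> 0) ->
     simple_F_divisible Q F).
Proof.
move=> noeth _ gF sF sup.
have hol := hollowN gF sF sup.
split=> //; split; last exact: partC.
move=> V sV pV art.
have [a [Fa Ha]] := annih gF sF sV pV art.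
split; first by exists a.
have [s [sa asp]] := fg noeth (Fideal gF Fa).
have [r [rs Hr]] := hollow_T hol (a0N sF Fa asp).
exists (r \*: idfun); split.
  by move=> y; have [x Hx] := Hr y; exists x.
move=> v Vv /=; exact: Ha (sa _ rs) Vv.
Qed.
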